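(* Let $(V,\langle\cdot,\cdot\rangle)$ be a pseudo-Euclidean real vector space of signature $(k,l)$ with $k\ge2$, $l\ge2$, and let $Z\subseteq V$ be a subspace with $q^+(Z)\ge1$. Then the following are equivalent: (i) $q^+(Z^\perp)=0$; (ii) every positive $(k-1)$-plane $H\subseteq V$ which is $Z$-extendable is also $Z$-orthogonally-extendable.
   Context: A pseudo-Euclidean space of signature $(k,l)$ is a finite-dimensional real vector space with a symmetric non-degenerate bilinear form whose Sylvester diagonal form has $k$ entries $+1$ and $l$ entries $-1$. For a subspace $L$, $q^+(L)$ denotes the number of $+1$'s in a diagonalization of the restriction of the form to $L$ (the maximal dimension of a positive definite subspace of $L$), and $L^\perp$ is the orthogonal complement. A positive $r$-plane is an $r$-dimensional subspace on which the form is positive definite. For a subspace $Z$ and a positive $(k-1)$-plane $H$: $H$ is $Z$-extendable if there is $z\in Z$ with $H+\mathbb{R}z$ a positive $k$-plane; $H$ is $Z$-orthogonally-extendable if there is $z\in Z\cap H^\perp$ with $H+\mathbb{R}z$ a positive $k$-plane. *)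

(* Defs.v *)
(* A pseudo-Euclidean space of dimension n is modelled as
   'rV[R]_n with the bilinear form <u,v> = u G v^T for a symmetric invertible
   Gram matrix G; subspaces are row spaces of matrices (mxalgebra). *)
From HB Require Import structures.
From mathcomp Require Import all_boot all_order all_algebra.
Set Implicit Arguments. Unset Strict Implicit. Unset Printing Implicit Defensive.
Import Order.TTheory GRing.Theory Num.Theory.
Local Open Scope ring_scope.

Section PE.
Variables (R : rcfType) (n : nat).

Definition form (G : 'M[R]_n) (u v : 'rV[R]_n) : R := (u *m G *m v^T) 0 0.

Definition posdef {m} (G : 'M[R]_n) (P : 'M[R]_(m, n)) : Prop :=
  forall v : 'rV[R]_n, (v <= P)%MS -> v != 0 -> 0 < form G v v.

Definition inspace {m} (Z : 'M[R]_(m, n)) : 'rV[R]_n -> Prop :=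
  fun v => (v <= Z)%MS.

Definition perp {m} (G : 'M[R]_n) (Z : 'M[R]_(m, n)) : 'rV[R]_n -> Prop :=
  fun v => forall z : 'rV[R]_n, (z <= Z)%MS -> form G v z = 0.

Definition qplus_is (G : 'M[R]_n) (L : 'rV[R]_n -> Prop) (d : nat) : Prop :=
  (exists P : 'M[R]_n, (forall v, (v <= P)%MS -> L v) /\ posdef G P /\ \rank P = d)
  /\ (forall P : 'M[R]_n, (forall v, (v <= P)%MS -> L v) -> posdef G P -> (\rank P <= d)%N).

Definition pos_plane {m} (G : 'M[R]_n) (r : nat) (H : 'M[R]_(m, n)) : Prop :=
  \rank H = r /\ posdef G H.

Definition Z_extendable {m p} (G : 'M[R]_n) (k : nat) (Z : 'M[R]_(p, n))
  (H : 'M[R]_(m, n)) : Prop :=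
  exists z : 'rV[R]_n, (z <= Z)%MS /\ pos_plane G k (col_mx H z).

Definition Z_orth_extendable {m p} (G : 'M[R]_n) (k : nat) (Z : 'M[R]_(p, n))
  (H : 'M[R]_(m, n)) : Prop :=
  exists z : 'rV[R]_n, (z <= Z)%MS /\ perp G H z /\ pos_plane G k (col_mx H z).

End PE.

(* Main.v *)
Require Import Defs.
From HB Require Import structures.
From mathcomp Require Import all_boot all_order all_algebra.
From mathcomp Require Import ring lra zify.
From Stdlib Require Import Classical.
Import Order.TTheory GRing.Theory Num.Theory.
Local Open Scope ring_scope.
Set Implicit Arguments. Unset Strict Implicit. Unset Printing Implicit Defensive.

Section Aux.
Variables (R : rcfType) (n : nat) (G : 'M[R]_n).
Local Notation form := Defs.form.
Hypothesis GT : G^T = G.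
Hypothesis Gu : G \in unitmx.

Lemma formC u v : form G u v = form G v u.
Proof.
have E (A : 'M[R]_1) : A 0 0 = A^T 0 0 by rewrite mxE.
rewrite /Defs.form [RHS]E.
by rewrite !trmx_mul trmxK GT mulmxA.
Qed.

Lemma formDl u v w : form G (u + v) w = form G u w + form G v w.
Proof. by rewrite /Defs.form !mulmxDl mxE. Qed.
Lemma formZl a u w : form G (a *: u) w = a * form G u w.
Proof. by rewrite /Defs.form -!scalemxAl mxE. Qed.
Lemma formDr u v w : form G w (u + v) = form G w u + form G w v.
Proof. by rewrite formC formDl !(formC w). Qed.
Lemma formZr a u w : form G w (a *: u) = a * form G w u.
Proof. by rewrite formC formZl formC. Qed.
Lemma formNl u w : form G (- u) w = - form G u w.
Proof. by rewrite -scaleN1r formZl mulN1r. Qed.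
Lemma formNr u w : form G w (- u) = - form G w u.
Proof. by rewrite formC formNl formC. Qed.
Lemma form0l w : form G 0 w = 0.
Proof. by rewrite /Defs.form !mul0mx mxE. Qed.
Lemma form0r w : form G w 0 = 0.
Proof. by rewrite formC form0l. Qed.
Lemma formBl u v w : form G (u - v) w = form G u w - form G v w.
Proof. by rewrite formDl formNl. Qed.
Lemma formBr u v w : form G w (u - v) = form G w u - form G w v.
Proof. by rewrite formDr formNr. Qed.

Definition perpM {m} (A : 'M[R]_(m, n)) : 'M[R]_n := kermx (G *m A^T).

Lemma perpMP m (A : 'M[R]_(m, n)) v :
  reflect (forall a, (a <= A)%MS -> form G v a = 0) (v <= perpM A)%MS.
Proof.
rewrite /perpM sub_kermx; apply: (iffP eqP) => [H0 a /submxP [D ->]|H0].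
  by rewrite /Defs.form trmx_mul mulmxA -(mulmxA v) H0 mul0mx mxE.
apply/rowP => i; have := H0 _ (row_sub i A).
rewrite /Defs.form tr_row colE !mulmxA -colE mxE => ->; by rewrite mxE.
Qed.

Lemma rank_perpM m (A : 'M[R]_(m, n)) : \rank (perpM A) = (n - \rank A)%N.
Proof.
rewrite /perpM mxrank_ker -mxrank_tr trmx_mul trmxK mxrankMfree //.
by rewrite row_free_unit unitmx_tr.
Qed.


Lemma perpMK m (A : 'M[R]_(m, n)) : (perpM (perpM A) :=: A)%MS.
Proof.
apply/eqmxP.
have sub : (A <= perpM (perpM A))%MS.
  apply/row_subP => i; apply/perpMP => b /perpMP hb.
  by rewrite formC hb // row_sub.
rewrite /eqmx sub andbT.
case: (mxrank_leqif_sup sub) => _ <-; rewrite !rank_perpM.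
have := rank_leq_col A; move=> h; apply/eqP; lia.
Qed.

Lemma posdefS m p (A : 'M[R]_(m, n)) (B : 'M[R]_(p, n)) :
  (B <= A)%MS -> posdef G A -> posdef G B.
Proof. by move=> BA pA v vB; apply: pA; apply: submx_trans BA. Qed.

Lemma rank_add_row m (A : 'M[R]_(m, n)) (v : 'rV[R]_n) :
  ~~ (v <= A)%MS -> \rank (col_mx A v) = (\rank A).+1.
Proof.
move=> vA; rewrite -addsmxE.
have := mxrank_sum_cap A v.
have v0 : v != 0 by apply: contra vA => /eqP ->; rewrite sub0mx.
rewrite rank_rV v0.
have -> : \rank (A :&: v)%MS = 0%N.
  have := mxrank_leqif_sup (capmxSr A v); rewrite rank_rV v0.
  case=> le1 eqv; apply/eqP; move: le1; rewrite leq_eqVlt ltnS leqn0 => /orP[|//].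
  by rewrite eqv => /(submx_trans)/(_ (capmxSl A v)); rewrite (negbTE vA).
lia.
Qed.

Lemma posdef_ext m (A : 'M[R]_(m, n)) (v : 'rV[R]_n) :
  posdef G A -> (v <= perpM A)%MS -> 0 < form G v v ->
  posdef G (col_mx A v) /\ \rank (col_mx A v) = (\rank A).+1.
Proof.
move=> pA /perpMP vA vpos; split.
  move=> u; rewrite -addsmxE => /sub_addsmxP [[D1 D2] /= ->] u0.
  set a := D1 *m A; rewrite [D2]mx11_scalar mul_scalar_mx.
  set c := D2 0 0.
  have aA : (a <= A)%MS by apply: submxMl.
  rewrite formDl !formDr !formZl !formZr (vA a aA) (formC a v) (vA a aA).
  rewrite !mulr0 !addr0 add0r.
  have [a0|a0] := eqVneq a 0.
    have c0 : c != 0.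
      apply: contra u0 => /eqP c0; rewrite -/a a0 [D2]mx11_scalar mul_scalar_mx.
      by rewrite -/c c0 scale0r addr0.
    rewrite a0 form0l add0r.
    have : 0 < c ^+ 2 by rewrite exprn_even_gt0 // c0 orbT.
    move: vpos; nra.
  have := pA a aA a0; have := vpos; nra.
apply: rank_add_row; apply/negP => vsA.
by move: vpos; rewrite (vA v vsA) ltxx.
Qed.

Lemma posdef_bound k : qplus_is G (fun _ => True) k ->
  forall m (A : 'M[R]_(m, n)), posdef G A -> (\rank A <= k)%N.
Proof.
move=> [_ hb] m A pA; rewrite -(genmxE A); apply: hb => //.
by apply: posdefS pA; rewrite genmxE.
Qed.


Lemma nzvec m (A : 'M[R]_(m, n)) : (0 < \rank A)%N -> exists v : 'rV[R]_n, (v <= A)%MS /\ v != 0.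
Proof.
move=> r0; exists (nz_row A); split; first exact: nz_row_sub.
by rewrite nz_row_eq0 -mxrank_eq0 -lt0n.
Qed.

Lemma perp_iso k : qplus_is G (fun _ => True) k ->
  forall m (P0 : 'M[R]_(m, n)) x, posdef G P0 -> \rank P0 = k ->
  (x <= perpM P0)%MS -> form G x x = 0 -> x = 0.
Proof.
move=> hk m P0 x pP rP xP xx; apply/eqP; apply: contraT => x0.
have xnP : ~~ (x <= perpM (perpM P0))%MS.
  rewrite perpMK; apply/negP => xin; have := pP x xin x0.
  by rewrite xx ltxx.
have [u [uP bu]] : exists u, (u <= perpM P0)%MS /\ form G x u != 0.
  apply: NNPP => nex; move/negP: xnP; apply; apply/perpMP => u uP.
  apply/eqP; apply: contraT => hu; by case: nex; exists u.
set b := form G x u in bu; set c := form G u u.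
set s := `|c| + 1.
have s0 : 0 < s by rewrite /s ltr_wpDl.
set t := b / s.
have ts : t * s = b by rewrite /t mulfVK // gt_eqF.
set v := x + t *: u.
have vP : (v <= perpM P0)%MS by rewrite addmx_sub // scalemx_sub.
have vpos : 0 < form G v v.
  have E : s * s * form G v v = b ^+ 2 * (2 * s + c).
    rewrite /v formDl !formDr !formZl !formZr xx (formC u x) -/b -/c -ts; ring.
  have : 0 < s * s * form G v v.
    rewrite E; apply: mulr_gt0; first by rewrite exprn_even_gt0 // bu orbT.
    have : - `|c| <= c by rewrite lerNnormlW.
    have := normr_ge0 c; rewrite /s => h1 h; lra.
  by rewrite pmulr_rgt0 // mulr_gt0.
have [pv rv] := posdef_ext pP vP vpos.
have := posdef_bound hk pv; rewrite rv rP ltnn //.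
Qed.

Lemma posdef_extend k : qplus_is G (fun _ => True) k ->
  forall j m (Q : 'M[R]_(m, n)), (k - \rank Q)%N = j -> posdef G Q ->
  exists Q' : 'M[R]_n, (Q <= Q')%MS /\ posdef G Q' /\ \rank Q' = k.
Proof.
move=> hk j; elim: j => [|j IH] m Q hj pQ.
  exists <<Q>>%MS; rewrite genmxE submx_refl; split=> //; split.
    by apply: posdefS pQ; rewrite genmxE.
  rewrite genmxE; have := posdef_bound hk pQ; lia.
have [[P0 [_ [pP rP]]] _] := hk.
have rc : (0 < \rank (P0 :&: perpM Q))%N.
  have := mxrank_sum_cap P0 (perpM Q); rewrite rank_perpM rP.
  have := rank_leq_col (P0 + perpM Q)%MS; have := rank_leq_col Q; lia.
have [w [wc w0]] := nzvec rc.
have wP : (w <= P0)%MS by apply: submx_trans wc (capmxSl _ _).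
have wQ : (w <= perpM Q)%MS by apply: submx_trans wc (capmxSr _ _).
have [pw rw] := posdef_ext pQ wQ (pP w wP w0).
have hj' : (k - \rank (col_mx Q w))%N = j by rewrite rw; lia.
have [Q' [sQ' pQ']] := IH _ _ hj' pw.
exists Q'; split=> //; apply: submx_trans sQ'; by rewrite -addsmxE addsmxSl.
Qed.

End Aux.

Theorem proposition2 (R : rcfType) (n k l : nat) (G : 'M[R]_n) :
  G^T = G -> G \in unitmx ->
  qplus_is G (fun _ => True) k -> qplus_is (- G) (fun _ => True) l ->
  (2 <= k)%N -> (2 <= l)%N ->
  forall Z : 'M[R]_n,
    (exists d, (1 <= d)%N /\ qplus_is G (inspace Z) d) ->
    (qplus_is G (perp G Z) 0 <->
     forall H : 'M[R]_n, pos_plane G k.-1 H ->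
       Z_extendable G k Z H -> Z_orth_extendable G k Z H).
Proof.
move=> GT Gu hk _ k2 _ Z [d [d1 hZ]].
have [[P0 [_ [pP0 rP0]]] _] := hk.
have kn : (k <= n)%N by rewrite -rP0 rank_leq_col.
have perpE : forall m (A : 'M[R]_(m, n)) v, perp G A v <-> (v <= perpM G A)%MS.
  by move=> m A v; split => [h|/perpMP h //]; apply/perpMP.
split.
- move=> [_ hb0] H [rH pH] [z [zZ [rP pP]]].
  set P := col_mx H z in rP pP.
  have Znp : forall v, (v <= perpM G Z)%MS -> Defs.form G v v <= 0.
    move=> v vZ; rewrite leNgt; apply/negP => vpos.
    have p0 : posdef G (0 : 'M[R]_(0, n)).
      by move=> u /submx0null ->; rewrite eqxx.
    have v0 : (v <= perpM G (0 : 'M[R]_(0,n)))%MS.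
      by apply/perpMP => a /submx0null ->; rewrite (form0r GT).
    have [pv rv] := posdef_ext GT Gu p0 v0 vpos.
    have : (\rank <<col_mx (0 : 'M[R]_(0,n)) v>>%MS <= 0)%N.
      apply: hb0; last by apply: posdefS pv; rewrite genmxE.
      move=> u; rewrite genmxE => uv; apply/perpE; apply: submx_trans uv _.
      by rewrite -addsmxE addsmx_sub sub0mx vZ.
    by rewrite genmxE rv mxrank0.
  set W := (Z :&: perpM G H)%MS.
  case: (classic (exists z', (z' <= W)%MS /\ 0 < Defs.form G z' z')) => [[z' [z'W z'pos]]|nW].
    have z'Z : (z' <= Z)%MS by apply: submx_trans z'W (capmxSl _ _).
    have z'H : (z' <= perpM G H)%MS by apply: submx_trans z'W (capmxSr _ _).
    have [pz rz] := posdef_ext GT Gu pH z'H z'pos.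
    exists z'; split=> //; split; first by apply/perpE.
    split=> //; rewrite rz rH; lia.
  exfalso.
  have Wn : forall w, (w <= W)%MS -> Defs.form G w w <= 0.
    move=> w wW; rewrite leNgt; apply/negP => wp; apply: nW; by exists w.
  set N := (perpM G Z + W)%MS.
  have Nn : forall v, (v <= N)%MS -> Defs.form G v v <= 0.
    move=> v /sub_addsmxP [[D1 D2] /= ->].
    have yZ : (D1 *m perpM G Z <= perpM G Z)%MS := submxMl _ _.
    have wW : (D2 *m W <= W)%MS := submxMl _ _.
    have wZ : (D2 *m W <= Z)%MS by apply: submx_trans wW (capmxSl _ _).
    have c : Defs.form G (D1 *m perpM G Z) (D2 *m W) = 0 by move/perpMP: yZ; apply.
    rewrite formDl !(formDr GT) c (formC GT (D2 *m W)) c.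
    have := Znp _ yZ; have := Wn _ wW; lra.
  have PN : \rank (P :&: N)%MS = 0%N.
    apply/eqP; rewrite mxrank_eq0 -submx0; apply/row_subP => i.
    rewrite submx0; apply: contraT => r0.
    have ri := row_sub i (P :&: N)%MS.
    have := pP _ (submx_trans ri (capmxSl _ _)) r0.
    have := Nn _ (submx_trans ri (capmxSr _ _)); move=> h1 h2; by have := lt_le_trans h2 h1; rewrite ltxx.
  have ZW : \rank (perpM G Z :&: W)%MS = 0%N.
    apply/eqP; rewrite mxrank_eq0 -submx0; apply/row_subP => i; rewrite submx0.
    set x := row i _.
    have ri : (x <= perpM G Z :&: W)%MS := row_sub _ _.
    have xZp : (x <= perpM G Z)%MS := submx_trans ri (capmxSl _ _).
    have xW : (x <= W)%MS := submx_trans ri (capmxSr _ _).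
    have xZ : (x <= Z)%MS := submx_trans xW (capmxSl _ _).
    have xH : (x <= perpM G H)%MS := submx_trans xW (capmxSr _ _).
    have xP : (x <= perpM G P)%MS.
      apply/perpMP => p; rewrite -addsmxE => /sub_addsmxP [[D1 D2] /= ->].
      rewrite (formDr GT).
      have -> : Defs.form G x (D1 *m H) = 0 by move/perpMP: xH; apply; apply: submxMl.
      have -> : Defs.form G x (D2 *m z) = 0.
        by move/perpMP: xZp; apply; apply: submx_trans (submxMl _ _) zZ.
      by rewrite addr0.
    have xx : Defs.form G x x = 0 by move/perpMP: xZp; apply.
    by rewrite (perp_iso GT Gu hk pP rP xP xx).
  have h1 := mxrank_sum_cap P N.
  have h2 := mxrank_sum_cap (perpM G Z) W.
  have h3 := mxrank_sum_cap Z (perpM G H).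
  rewrite !rank_perpM // in h2 h3.
  have := rank_leq_col (P + N)%MS; have := rank_leq_col (Z + perpM G H)%MS.
  have := rank_leq_col Z.
  rewrite -/N in h1 h2; rewrite -/W rH in h3; lia.
- move=> hii; split.
    exists 0; split; [|split].
    - by move=> v; rewrite submx0 => /eqP -> z _; rewrite form0l.
    - by move=> v; rewrite submx0 => /eqP ->; rewrite eqxx.
    - by rewrite mxrank0.
  move=> P Pperp pP; rewrite leqn0 -[_ == _]negbK -lt0n; apply/negP => rpos.
  have [y [yP y0]] := nzvec rpos.
  have yZ : (y <= perpM G Z)%MS by apply/perpE; apply: Pperp.
  have ypos := pP y yP y0.
  have [[A [AZ [pA rA]]] Amax] := hZ.
  have AsZ : (A <= Z)%MS by apply/row_subP => i; apply: AZ; apply: row_sub.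
  have rA0 : (0 < \rank A)%N by rewrite rA.
  have [a1 [a1A a10]] := nzvec rA0.
  have a1Z : (a1 <= Z)%MS := submx_trans a1A AsZ.
  have a1pos := pA a1 a1A a10.
  have yA : (y <= perpM G A)%MS.
    apply/perpMP => a aA; move/perpMP: yZ; apply; exact: submx_trans aA AsZ.
  have [pAy rAy] := posdef_ext GT Gu pA yA ypos.
  have [Q [sQ [pQ rQ]]] := posdef_extend GT Gu hk erefl pAy.
  have AQ : (A <= Q)%MS by apply: submx_trans sQ; rewrite -addsmxE addsmxSl.
  have yQ : (y <= Q)%MS by apply: submx_trans sQ; rewrite -addsmxE addsmxSr.
  have a1Q := submx_trans a1A AQ.
  set al := Defs.form G a1 a1 in a1pos; set Y := Defs.form G y y in ypos.
  set w := al *: y - Y *: a1.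
  have ya1 : Defs.form G y a1 = 0 by move/perpMP: yA; apply.
  have a1y : Defs.form G a1 y = 0 by rewrite formC.
  have wa1 : Defs.form G a1 w = - (Y * al).
    by rewrite /w (formBr GT) !(formZr GT) a1y mulr0 sub0r.
  have wy : Defs.form G y w = al * Y.
    by rewrite /w (formBr GT) !(formZr GT) ya1 mulr0 subr0.
  set H := (Q :&: perpM G w)%MS.
  have a1nw : ~~ (a1 <= perpM G w)%MS.
    apply/negP => /perpMP h; have := h w (submx_refl w); rewrite wa1.
    have : 0 < Y * al by apply: mulr_gt0.
    move=> h1 /eqP; rewrite oppr_eq0 => /eqP h2; by rewrite h2 ltxx in h1.
  have w0 : w != 0.
    apply: contra a1nw => /eqP ->; apply/perpMP => a; move/submx0null ->.
    by rewrite (form0r GT).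
  have rH : \rank H = k.-1.
    have r1 : \rank w = 1%N by rewrite rank_rV w0.
    have h := mxrank_sum_cap Q (perpM G w).
    rewrite rank_perpM // r1 rQ in h.
    have hs : \rank (Q + perpM G w)%MS = n.
      have ss := addsmxSr Q (perpM G w).
      case: (mxrank_leqif_sup ss) => le eqv.
      rewrite rank_perpM // r1 in le eqv.
      have : (n - 1)%N != \rank (Q + perpM G w)%MS.
        rewrite eqv; apply/negP => s; move/negP: a1nw; apply.
        apply: submx_trans s; apply: submx_trans a1Q _; exact: addsmxSl.
      have := rank_leq_col (Q + perpM G w)%MS; move=> h1 /eqP h2; clear -le h1 h2 kn k2; lia.
    rewrite hs -/H in h; clear -h kn k2; lia.
  have pH : posdef G H by apply: posdefS pQ; exact: capmxSl.
  have HQ : (H <= Q)%MS := capmxSl _ _.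
  have ext : Z_extendable G k Z H.
    exists a1; split=> //; split; last first.
      by apply: posdefS pQ; rewrite -addsmxE addsmx_sub HQ a1Q.
    have a1nH : ~~ (a1 <= H)%MS.
      by apply: contra a1nw => h; apply: submx_trans h (capmxSr _ _).
    rewrite (rank_add_row Gu a1nH) rH; clear -k2; lia.
  have [z' [z'Z [z'H [rz' pz']]]] := hii H (conj rH pH) ext.
  have z'0 : z' != 0.
    apply/negP => /eqP e; move: rz'; rewrite e -addsmxE addsmx0 rH; clear -k2; lia.
  have z'pos : 0 < Defs.form G z' z' by apply: pz' => //; rewrite -addsmxE addsmxSr.
  have z'y : Defs.form G z' y = 0.
    by rewrite (formC GT); move/perpMP: yZ; apply.
  have z'A : (z' <= perpM G A)%MS.
    apply/perpMP => a aA.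
    have wy0 : Defs.form G y w != 0 by rewrite wy mulf_neq0 // gt_eqF.
    set cc := Defs.form G a w / Defs.form G y w.
    have hH : (a - cc *: y <= H)%MS.
      rewrite sub_capmx; apply/andP; split.
        by rewrite -scaleNr addmx_sub // ?scalemx_sub // (submx_trans aA AQ).
      apply/perpMP => b /sub_rVP [c ->].
      rewrite (formZr GT) formBl formZl /cc mulfVK // subrr mulr0 //.
    have -> : a = (a - cc *: y) + cc *: y by rewrite subrK.
    by rewrite (formDr GT) (formZr GT) z'y mulr0 addr0; apply: z'H.
  have [pAz rAz] := posdef_ext GT Gu pA z'A z'pos.
  have hAZ : forall v, (v <= <<col_mx A z'>>%MS)%MS -> inspace Z v.
    move=> v; rewrite genmxE => vs; apply: submx_trans vs _.
    by rewrite -addsmxE addsmx_sub AsZ z'Z.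
  have hpA : posdef G <<col_mx A z'>>%MS by apply: posdefS pAz; rewrite genmxE.
  by have := Amax _ hAZ hpA; rewrite genmxE rAz rA ltnn.
Qed.
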